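(* The action of $W_d(\mathbb C)$ on $L^{(d-1)}\cap U_d(\mathbb C)$ is free.
   Context: Fix $d\ge2$. $V=\mathbb C^d\oplus\mathfrak{so}(d,\mathbb C)$, elements $(v,M)$ with $v=(c_1,\dots,c_d)^\top$, $M$ complex skew-symmetric, $M_{ij}=c_{ij}=-M_{ji}$ for $i<j$; $O_d(\mathbb C)=\{A:AA^\top=I\}$ acts by $A\cdot(v,M)=(Av,AMA^\top)$. $W_d(\mathbb C)$ is the group of diagonal matrices with entries in $\{-1,1\}$. $L^{(1)}=\{c_1=\dots=c_{d-1}=0\}$, and for $2\le i\le d-1$, $L^{(i)}=\{(v,M)\in L^{(i-1)}:c_{k(d-i+2)}=0,\ 1\le k\le d-i\}$ (so on $L^{(d-1)}$ only $c_d,c_{12},c_{23},\dots,c_{(d-1)d}$ can be nonzero). Let $f_1=c_1^2+\dots+c_d^2$; for $2\le i\le d-1$ let $f_i$ be the $O_d(\mathbb C)$-invariant rational function on $V$ with $f_i|_{L^{(i-1)}}=c_{1(d-i+2)}^2+\dots+c_{(d-i+1)(d-i+2)}^2$; let $f_d$ be the invariant rational function with $f_d|_{L^{(d-1)}}=c_{12}^2$ (these exist and are uniquely determined). $U_d(\mathbb C)$ is the set of points in the domain of every $f_k$ with $\prod_kf_k\neq0$. A group action is free if every stabilizer is trivial. *)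

(* Defs.v *)
(* Complex numbers are modelled as R[i] (mathcomp-real-closed
   'complex') over an arbitrary R : realType (i.e. the real numbers). *)
From HB Require Import structures.
From mathcomp Require Import all_boot all_order all_algebra.
From mathcomp Require Import complex.
From mathcomp Require Import reals.
Set Implicit Arguments. Unset Strict Implicit. Unset Printing Implicit Defensive.
Import Order.TTheory GRing.Theory Num.Theory.
Local Open Scope ring_scope.

(* Points (v, M) of C^d (+) so(d,C): pairs of a column vector and a matrix;
   the ambient space V is the set of pairs whose matrix is skew-symmetric. *)
Definition pt (C : fieldType) (d : nat) := ('cV[C]_d * 'M[C]_d)%type.

Definition inV (C : fieldType) (d : nat) (x : pt C d) : Prop := x.2^T = - x.2.

(* 1-based coordinates: cv x i = c_i,  cm x i j = c_ij (entry (i,j) of M);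
   out-of-range indices give 0 (never used in range-guarded statements). *)
Definition cv (C : fieldType) (d : nat) (x : pt C d) (i : nat) : C :=
  match (insub i.-1 : option 'I_d) with Some a => x.1 a ord0 | None => 0 end.
Definition cm (C : fieldType) (d : nat) (x : pt C d) (i j : nat) : C :=
  match (insub i.-1 : option 'I_d), (insub j.-1 : option 'I_d) with
  | Some a, Some b => x.2 a b | _, _ => 0 end.

Definition act (C : fieldType) (d : nat) (A : 'M[C]_d) (x : pt C d) : pt C d :=
  (A *m x.1, A *m x.2 *m A^T).

Definition orthogonal (C : fieldType) (d : nat) (A : 'M[C]_d) : Prop :=
  A *m A^T = 1%:M.

Definition inW (C : fieldType) (d : nat) (A : 'M[C]_d) : Prop :=
  (forall i j : 'I_d, i != j -> A i j = 0) /\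
  (forall i : 'I_d, A i i = 1 \/ A i i = -1).

Inductive polyfun (C : fieldType) (d : nat) : (pt C d -> C) -> Prop :=
| pf_const (c : C) : polyfun (fun _ => c)
| pf_vcoord (i : 'I_d) : polyfun (fun x => x.1 i ord0)
| pf_mcoord (i j : 'I_d) : polyfun (fun x => x.2 i j)
| pf_add f g : polyfun f -> polyfun g -> polyfun (fun x => f x + g x)
| pf_mul f g : polyfun f -> polyfun g -> polyfun (fun x => f x * g x).

(* rational functions on V, given by a representative fraction p/q *)
Definition ratf (C : fieldType) (d : nat) := ((pt C d -> C) * (pt C d -> C))%type.

Definition ratf_valid (C : fieldType) (d : nat) (r : ratf C d) : Prop :=
  [/\ polyfun r.1, polyfun r.2 & exists x, inV x /\ r.2 x <> 0].

Definition ratf_eq (C : fieldType) (d : nat) (r s : ratf C d) : Prop :=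
  forall x, inV x -> r.1 x * s.2 x = s.1 x * r.2 x.

Definition ratf_val (C : fieldType) (d : nat) (r : ratf C d) (x : pt C d) (y : C)
  : Prop :=
  inV x /\ exists s, [/\ ratf_valid s, ratf_eq r s, s.2 x <> 0 & y = s.1 x / s.2 x].

Definition in_dom (C : fieldType) (d : nat) (r : ratf C d) (x : pt C d) : Prop :=
  exists y, ratf_val r x y.

Definition O_invariant (C : fieldType) (d : nat) (r : ratf C d) : Prop :=
  forall A : 'M[C]_d, orthogonal A ->
    forall x, inV x -> r.1 (act A x) * r.2 x = r.1 x * r.2 (act A x).

Definition restricts_to (C : fieldType) (d : nat) (r : ratf C d)
  (L : pt C d -> Prop) (g : pt C d -> C) : Prop :=
  exists s, [/\ ratf_valid s, ratf_eq r s, (exists x0, L x0 /\ s.2 x0 <> 0)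
              & forall x, L x -> s.1 x = g x * s.2 x].

Fixpoint Lsub (C : fieldType) (d : nat) (i : nat) (x : pt C d) : Prop :=
  match i with
  | 0 => inV x
  | S i' =>
    match i' with
    | 0 => inV x /\ (forall j, (1 <= j <= d - 1)%N -> cv x j = 0)
    | S _ => Lsub i' x /\
             (forall k, (1 <= k <= d - i)%N -> cm x k (d - i + 2) = 0)
    end
  end.

(* the prescribed restrictions of f_i:
   f_1 = c_1^2 + ... + c_d^2 (on L^(0) = V);
   f_i|L^(i-1) = c_{1(d-i+2)}^2 + ... + c_{(d-i+1)(d-i+2)}^2  (2 <= i <= d-1);
   f_d|L^(d-1) = c_12^2. *)
Definition ftarget (C : fieldType) (d : nat) (i : nat) (x : pt C d) : C :=
  if i == 1%N then \sum_(1 <= j < d.+1) cv x j ^+ 2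
  else if i == d then cm x 1 2 ^+ 2
  else \sum_(1 <= k < (d - i + 1).+1) cm x k (d - i + 2) ^+ 2.

Definition is_f_family (C : fieldType) (d : nat) (f : nat -> ratf C d) : Prop :=
  forall i, (1 <= i <= d)%N ->
    [/\ ratf_valid (f i), O_invariant (f i) & restricts_to (f i) (Lsub i.-1) (ftarget i)].

Definition inU (C : fieldType) (d : nat) (f : nat -> ratf C d) (x : pt C d) : Prop :=
  inV x /\ exists ys : nat -> C,
    (forall k, (1 <= k <= d)%N -> ratf_val (f k) x (ys k)) /\
    \prod_(1 <= k < d.+1) ys k <> 0.

(* Main.v *)
Require Import Defs.
From HB Require Import structures.
From mathcomp Require Import all_boot all_order all_algebra.
From mathcomp Require Import complex.
From mathcomp Require Import reals.
From mathcomp Require Import ring zify.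
Import GRing.Theory Num.Theory.
Set Implicit Arguments. Unset Strict Implicit.
Local Open Scope ring_scope.

Section Line.
Variable C : numFieldType.
Variable d : nat.

Lemma poly_all0 (p : {poly C}) : (forall t, p.[t] = 0) -> p = 0.
Proof.
move=> H; apply/eqP; apply/negPn/negP => pn0.
have h1 : all (root p) [seq i%:R | i <- iota 0 (size p)].
  by apply/allP => t _; rewrite /root H.
have h2 : uniq [seq (i%:R : C) | i <- iota 0 (size p)].
  rewrite map_inj_uniq ?iota_uniq // => i j /eqP; rewrite eqr_nat => /eqP.
  done.
have := max_poly_roots pn0 h1 h2.
by rewrite size_map size_iota ltnn.
Qed.

Definition lp (a b : pt C d) (t : C) : pt C d :=
  (a.1 + t *: (b.1 - a.1), a.2 + t *: (b.2 - a.2)).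

Lemma lp0 a b : lp a b 0 = a.
Proof. by rewrite /lp !scale0r !addr0; case: a. Qed.
Lemma lp1 a b : lp a b 1 = b.
Proof. by rewrite /lp !scale1r !subrKC; case: b. Qed.

Definition linepoly (f : pt C d -> C) :=
  forall a b, exists P : {poly C}, forall t, f (lp a b t) = P.[t].

Lemma lpc c : linepoly (fun _ => c).
Proof. by move=> a b; exists c%:P => t; rewrite hornerC. Qed.

Lemma lpD f g : linepoly f -> linepoly g -> linepoly (fun x => f x + g x).
Proof.
move=> hf hg a b; have [P HP] := hf a b; have [Q HQ] := hg a b.
by exists (P + Q) => t; rewrite hornerD HP HQ.
Qed.

Lemma lpM f g : linepoly f -> linepoly g -> linepoly (fun x => f x * g x).
Proof.
move=> hf hg a b; have [P HP] := hf a b; have [Q HQ] := hg a b.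
by exists (P * Q) => t; rewrite hornerM HP HQ.
Qed.

Lemma lpN f : linepoly f -> linepoly (fun x => - f x).
Proof.
move=> hf a b; have [P HP] := hf a b.
by exists (- P) => t; rewrite hornerN HP.
Qed.

Lemma lpv i : linepoly (fun x => x.1 i ord0).
Proof.
move=> a b; exists ((a.1 i ord0)%:P + (b.1 i ord0 - a.1 i ord0)%:P * 'X) => t.
by rewrite /lp /= !mxE hornerD hornerM hornerX !hornerC mulrC.
Qed.

Lemma lpm i j : linepoly (fun x => x.2 i j).
Proof.
move=> a b; exists ((a.2 i j)%:P + (b.2 i j - a.2 i j)%:P * 'X) => t.
by rewrite /lp /= !mxE hornerD hornerM hornerX !hornerC mulrC.
Qed.

Lemma lp_polyfun f : polyfun f -> linepoly f.
Proof.
elim=> [c|i|i j|f1 g1 _ h1 _ h2|f1 g1 _ h1 _ h2].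
- exact: lpc.
- exact: lpv.
- exact: lpm.
- exact: lpD.
- exact: lpM.
Qed.

Lemma lp_sum (I : Type) (r : seq I) (F : I -> pt C d -> C) :
  (forall i, linepoly (F i)) -> linepoly (fun x => \sum_(i <- r) F i x).
Proof.
move=> hF a b; elim: r => [|i r [P HP]].
  by exists 0 => t; rewrite big_nil horner0.
have [Q HQ] := hF i a b.
by exists (Q + P) => t; rewrite big_cons hornerD HQ HP.
Qed.

Lemma key (P : pt C d -> Prop) (p q : pt C d -> C) a :
  (forall a b t, P a -> P b -> P (lp a b t)) ->
  linepoly p -> linepoly q -> P a -> q a <> 0 ->
  (forall z, P z -> p z * q z = 0) -> forall b, P b -> p b = 0.
Proof.
move=> hP hp hq Pa qa H b Pb.
have [Pp HPp] := hp a b; have [Pq HPq] := hq a b.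
have : Pp * Pq = 0.
  by apply: poly_all0 => t; rewrite hornerM -HPp -HPq H //; apply: hP.
move/eqP; rewrite mulf_eq0 => /orP [/eqP Pp0|/eqP Pq0].
  by rewrite -(lp1 a b) HPp Pp0 horner0.
by exfalso; apply: qa; rewrite -(lp0 a b) HPq Pq0 horner0.
Qed.

End Line.

Section L2.
Variable C : numFieldType.
Variable d : nat.
Implicit Types a b x : pt C d.

Lemma cv_lp a b t j : cv (lp a b t) j = cv a j + t * (cv b j - cv a j).
Proof.
rewrite /cv; case: (insub j.-1 : option 'I_d) => [k|]; last by ring.
by rewrite /lp /= !mxE.
Qed.

Lemma cm_lp a b t i j : cm (lp a b t) i j = cm a i j + t * (cm b i j - cm a i j).
Proof.
rewrite /cm; case: (insub i.-1 : option 'I_d) => [k|]; last by ring.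
case: (insub j.-1 : option 'I_d) => [l|]; last by ring.
by rewrite /lp /= !mxE.
Qed.

Lemma lpX2 (f : pt C d -> C) : linepoly f -> linepoly (fun x => f x ^+ 2).
Proof.
move=> hf a b; have [P HP] := hf a b.
by exists (P * P) => t; rewrite hornerM -HP expr2.
Qed.

Lemma lp_cv j : linepoly (fun x : pt C d => cv x j).
Proof.
move=> a b; exists ((cv a j)%:P + (cv b j - cv a j)%:P * 'X) => t.
by rewrite cv_lp hornerD hornerM hornerX !hornerC mulrC.
Qed.

Lemma lp_cm i j : linepoly (fun x : pt C d => cm x i j).
Proof.
move=> a b; exists ((cm a i j)%:P + (cm b i j - cm a i j)%:P * 'X) => t.
by rewrite cm_lp hornerD hornerM hornerX !hornerC mulrC.
Qed.

Lemma lp_ftarget i : linepoly (@ftarget C d i).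
Proof.
rewrite /ftarget; case: (i == 1%N).
  by apply: lp_sum => j; apply: lpX2; apply: lp_cv.
case: (i == d); first by apply: lpX2; apply: lp_cm.
by apply: lp_sum => j; apply: lpX2; apply: lp_cm.
Qed.

Lemma inV_lp a b t : inV a -> inV b -> inV (lp a b t).
Proof.
rewrite /inV => /matrixP ha /matrixP hb; apply/matrixP => i j.
move: (ha i j) (hb i j); rewrite /lp /= !mxE => -> ->; ring.
Qed.

Lemma Lsub_lp i a b t : Lsub i a -> Lsub i b -> Lsub i (lp a b t).
Proof.
elim: i => [|[|i] IH]; first exact: inV_lp.
  move=> [ha1 ha2] [hb1 hb2]; split; first exact: inV_lp.
  by move=> j hj; rewrite cv_lp ha2 // hb2 // ; ring.
move=> [ha1 ha2] [hb1 hb2]; split; first exact: IH.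
by move=> k hk; rewrite cm_lp ha2 // hb2 //; ring.
Qed.

Lemma Lsub_S i x : Lsub i.+1 x -> Lsub i x.
Proof. by case: i => [[]|i []]. Qed.

Lemma Lsub_le i j x : (i <= j)%N -> Lsub j x -> Lsub i x.
Proof.
move=> /subnK <-; elim: (j - i)%N => [|n IH] //= h.
by apply: IH; apply: Lsub_S.
Qed.

Lemma Lsub_V i x : Lsub i x -> inV x.
Proof. by move=> h; apply: (Lsub_le (leq0n i) h). Qed.

End L2.

Section L3.
Variable C : numFieldType.
Variable d : nat.

Lemma val_target (f : ratf C d) i (g : pt C d -> C) x y :
  ratf_valid f -> restricts_to f (Lsub i) g -> linepoly g ->
  Lsub i x -> ratf_val f x y -> y = g x.
Proof.
move=> [pf1 pf2 [z [Vz fz]]] [s [[ps1 ps2 _] fs [x0 [Lx0 s0]] sg]] lg Lx.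
move=> [Vx [s' [[ps1' ps2' _] fs' s'x ->]]].
have step1 : forall w, inV w -> s.1 w * s'.2 w - s'.1 w * s.2 w = 0.
  apply: (@key _ _ (@inV C d) (fun w => s.1 w * s'.2 w - s'.1 w * s.2 w) f.2 z) => //.
  - exact: inV_lp.
  - apply: lpD; last apply: lpN; apply: lpM; exact: lp_polyfun.
  - exact: lp_polyfun.
  move=> w Vw; have e1 := fs w Vw; have e2 := fs' w Vw.
  have -> : (s.1 w * s'.2 w - s'.1 w * s.2 w) * f.2 w =
     (s.1 w * f.2 w) * s'.2 w - (s'.1 w * f.2 w) * s.2 w by ring.
  rewrite -e1 -e2; ring.
have step2 : forall w, Lsub i w -> g w * s'.2 w - s'.1 w = 0.
  apply: (@key _ _ (Lsub i) (fun w => g w * s'.2 w - s'.1 w) s.2 x0) => //.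
  - exact: Lsub_lp.
  - apply: lpD; last apply: lpN; first apply: lpM => //; exact: lp_polyfun.
  - exact: lp_polyfun.
  move=> w Lw; have := step1 w (Lsub_V Lw); rewrite sg //.
  move=> e; rewrite -e; ring.
have := step2 x Lx; move/eqP; rewrite subr_eq0 => /eqP <-.
by rewrite mulfK //; apply/eqP.
Qed.

End L3.

Lemma cv_ord (C : fieldType) d (x : pt C d) (i : 'I_d) : cv x i.+1 = x.1 i ord0.
Proof. by rewrite /cv /= valK. Qed.

Lemma cm_ord (C : fieldType) d (x : pt C d) (i j : 'I_d) : cm x i.+1 j.+1 = x.2 i j.
Proof. by rewrite /cm /= !valK. Qed.

Lemma Lsub_cond (C : fieldType) d (x : pt C d) k : (2 <= k)%N -> Lsub k x ->
  forall m, (1 <= m <= d - k)%N -> cm x m (d - k + 2) = 0.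
Proof. by case: k => [|[|k]] //= _ [_ H]. Qed.

Theorem proposition3p8 (R : realType) (d : nat) (hd : (2 <= d)%N)
  (f : nat -> ratf R[i] d) (hf : is_f_family f) :
  forall (A : 'M[R[i]]_d) (x : pt R[i] d),
    inW A -> Lsub d.-1 x -> inU f x -> act A x = x -> A = 1%:M.
Proof.
move=> A x [hdiag _] hL [Vx [ys [hys hprod]]] hact.
have ys_nz : forall k, (1 <= k <= d)%N -> ys k <> 0.
  have : \prod_(1 <= k < d.+1) ys k != 0 by apply/eqP.
  rewrite prodf_seq_neq0 => /allP H k hk; apply/eqP.
  by have := H k; rewrite mem_index_iota ltnS; apply.
have ys_eq : forall k, (1 <= k <= d)%N -> ys k = ftarget k x.
  move=> k hk; have [hv _ hr] := hf k hk.
  have Lk : Lsub k.-1 x by apply: (@Lsub_le R[i] d _ _ x _ hL); lia.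
  have lf := @lp_ftarget R[i] d k.
  have := @val_target (R[i]) d (f k) k.-1 (ftarget k) x (ys k) hv hr lf Lk (hys k hk).
  done.
have F1 : cv x d != 0.
  apply/eqP => h; apply: (ys_nz 1%N); first lia.
  rewrite ys_eq; last lia.
  rewrite /ftarget eqxx; apply: big1_seq => j /andP [_].
  rewrite mem_index_iota ltnS => hj.
  have [hjd|hjd] := eqVneq j d; first by rewrite hjd h expr2 mul0r.
  have L1 : Lsub 1 x by apply: (@Lsub_le R[i] d _ _ x _ hL); lia.
  case: L1 => _ L1; rewrite L1 ?expr2 ?mul0r //; lia.
have F2 : forall j, (j.+2 <= d)%N -> cm x j.+1 j.+2 != 0.
  case=> [|j] hj; apply/eqP => h.
    apply: (ys_nz d); first lia.
    rewrite ys_eq; last lia.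
    have d1 : (d == 1%N) = false by apply/eqP; lia.
    by rewrite /ftarget d1 eqxx h expr2 mul0r.
  apply: (ys_nz (d - j.+1)%N); first lia.
  rewrite ys_eq; last lia.
  have e1 : ((d - j.+1)%N == 1%N) = false by apply/eqP; lia.
  have e2 : ((d - j.+1)%N == d) = false by apply/eqP; lia.
  have e3 : (d - (d - j.+1) = j.+1)%N by lia.
  have Lk : Lsub (d - j.+1)%N x by apply: (@Lsub_le R[i] d _ _ x _ hL); lia.
  have h2 : (2 <= d - j.+1)%N by lia.
  have Hc := Lsub_cond h2 Lk.
  rewrite e3 in Hc.
  rewrite /ftarget e1 e2 e3; apply: big1_seq => m /andP [_].
  rewrite mem_index_iota ltnS => hm.
  have [hmd|hmd] := eqVneq m j.+2; first by rewrite hmd addn2 h expr2 mul0r.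
  rewrite Hc ?expr2 ?mul0r //; lia.
have Ad : A = diag_mx (\row_i A i i).
  apply/matrixP => i j; rewrite !mxE; case: eqVneq => [->|ne].
    by rewrite mulr1n.
  by rewrite mulr0n hdiag.
have e1 := congr1 fst hact; have e2 := congr1 snd hact; rewrite /= in e1 e2.
rewrite Ad in e1 e2.
rewrite tr_diag_mx mul_diag_mx mul_mx_diag in e2; rewrite mul_diag_mx in e1.
have a1 : forall i : 'I_d, A i i * x.1 i ord0 = x.1 i ord0.
  by move=> i; move/matrixP: e1 => /(_ i ord0); rewrite !mxE.
have a2 : forall i j : 'I_d, A i i * x.2 i j * A j j = x.2 i j.
  by move=> i j; move/matrixP: e2 => /(_ i j); rewrite !mxE.
have claim : forall n (i : 'I_d), (i + n)%N = d.-1 -> A i i = 1.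
  elim=> [|n IH] i hi.
    have hid : i.+1 = d by lia.
    have F1' : x.1 i ord0 != 0 by rewrite -cv_ord hid.
    by apply: (mulIf F1'); rewrite mul1r a1.
  have hi' : (i.+1 < d)%N by lia.
  have := IH (Ordinal hi'); rewrite /= => /(_ ltac:(lia)) h1.
  have hc : x.2 i (Ordinal hi') != 0.
    by rewrite -cm_ord; apply: F2; lia.
  apply: (mulIf hc); rewrite mul1r.
  by have := a2 i (Ordinal hi'); rewrite h1 mulr1.
apply/matrixP => i j; rewrite mxE; case: eqVneq => [<-|ne].
  by rewrite mulr1n (claim (d.-1 - i)%N i) //; have := ltn_ord i; lia.
by rewrite mulr0n hdiag.
Qed.
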